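(* Let $g\colon A\to D$ be an epimorphism from a finitely generated lattice $A$ onto a lattice $D$ with finite generating set $P$ for which $D$ satisfies Dean's condition (D). Then $g$ is lower bounded if and only if for every $p\in P$ the preimage $g^{-1}(p)$ has a least element.
   Context: A lattice homomorphism $g\colon A\to D$ is lower bounded if for every $d\in D$ the set $\{x\in A: g(x)\ge d\}$ is empty or has a least element (for surjective $g$: every preimage $g^{-1}(d)$ has a least element). Dean's condition (D) for $D$ with finite generating set $P$: for all finite $S,T\subseteq D$ with $\bigwedge S\le\bigvee T$, either some $s\in S$ has $s\le\bigvee T$, or some $t\in T$ has $\bigwedge S\le t$, or some $p\in P$ has $\bigwedge S\le p\le\bigvee T$. *)

(* Defs.v *)
From HB Require Import structures.
From mathcomp Require Import all_boot all_order.
Set Implicit Arguments. Unset Strict Implicit. Unset Printing Implicit Defensive.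
Import Order.TTheory.
Local Open Scope order_scope.

Inductive generated {d : Order.disp_t} {T : latticeType d} (P : seq T) : T -> Prop :=
| gen_base x : x \in P -> generated P x
| gen_meet x y : generated P x -> generated P y -> generated P (x `&` y)
| gen_join x y : generated P x -> generated P y -> generated P (x `|` y).

Definition generates {d : Order.disp_t} {T : latticeType d} (P : seq T) : Prop :=
  forall x : T, generated P x.

Definition finitely_generated {d : Order.disp_t} (T : latticeType d) : Prop :=
  exists P : seq T, generates P.

Definition lattice_hom {d1 d2 : Order.disp_t} {A : latticeType d1} {D : latticeType d2}
  (g : A -> D) : Prop :=
  forall x y : A, g (x `&` y) = g x `&` g y /\ g (x `|` y) = g x `|` g y.

Definition least_of {d : Order.disp_t} {T : latticeType d} (Q : T -> Prop) (x : T) : Prop :=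
  Q x /\ forall y, Q y -> x <= y.

Definition lower_bounded {d1 d2 : Order.disp_t} {A : latticeType d1} {D : latticeType d2}
  (g : A -> D) : Prop :=
  forall e : D, (forall x : A, ~ (e <= g x)) \/ exists x : A, least_of (fun y => e <= g y) x.

Definition smeet {d : Order.disp_t} {T : latticeType d} (x : T) (s : seq T) : T :=
  foldr Order.meet x s.
Definition sjoin {d : Order.disp_t} {T : latticeType d} (x : T) (s : seq T) : T :=
  foldr Order.join x s.

(* Dean's condition (D) for the generating set P; S = s0::s, T = t0::t are
   arbitrary nonempty finite subsets. *)
Definition dean {d : Order.disp_t} {D : latticeType d} (P : seq D) : Prop :=
  forall (s0 : D) (s : seq D) (t0 : D) (t : seq D),
    smeet s0 s <= sjoin t0 t ->
    (exists2 u, u \in s0 :: s & u <= sjoin t0 t) \/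
    (exists2 v, v \in t0 :: t & smeet s0 s <= v) \/
    (exists2 p, p \in P & (smeet s0 s <= p) && (p <= sjoin t0 t)).

(* Main.v *)
Require Import Defs.
From HB Require Import structures.
From mathcomp Require Import all_boot all_order.
Import Order.TTheory.
Local Open Scope order_scope.

Section Aux.
Context {dA dD : Order.disp_t} {A : latticeType dA} {D : latticeType dD}
  {g : A -> D} (Hg : lattice_hom g).

Lemma gmono (x y : A) : x <= y -> g x <= g y.
Proof.
move=> le; have [_ H] := Hg x y; rewrite (join_r le) in H.
by rewrite H leUl.
Qed.

Lemma gmeet (x y : A) : g (x `&` y) = g x `&` g y.
Proof. by have [H _] := Hg x y. Qed.

Lemma gjoin (x y : A) : g (x `|` y) = g x `|` g y.
Proof. by have [_ H] := Hg x y. Qed.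

Lemma listmeet (e : D) (L : seq A) (z0 : A) : e <= g z0 ->
  exists z, [/\ e <= g z, z <= z0 & forall b, b \in L -> e <= g b -> z <= b].
Proof.
elim: L => [|b L IH] ez0.
  by exists z0; split.
have [z [ez zz0 zb]] := IH ez0.
case eb: (e <= g b).
  exists (z `&` b); split.
  - by rewrite gmeet lexI ez eb.
  - exact: leIxl.
  move=> c; rewrite inE => /orP [/eqP -> _|cL ec]; first exact: leIr.
  by apply: leIxl; apply: zb.
exists z; split => // c; rewrite inE => /orP [/eqP ->|cL ec]; first by rewrite eb.
exact: zb.
Qed.

Lemma fiber_up (p : D) (x : A) : least_of (fun y => g y = p) x ->
  p <= g x /\ forall y, p <= g y -> x <= y.
Proof.
move=> [gx H]; split; first by rewrite gx.
move=> y py; apply: (le_trans (H (x `&` y) _)); last exact: leIr.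
by rewrite gmeet gx (meet_l py).
Qed.

Lemma getBp (P : seq D) :
  (forall p, p \in P -> exists x : A, least_of (fun y => g y = p) x) ->
  exists Bp : seq A, forall p, p \in P -> exists2 b, b \in Bp &
    (p <= g b /\ forall y, p <= g y -> b <= y).
Proof.
elim: P => [|p P IH] H; first by exists [::].
have [Bp HB] : exists Bp : seq A, forall q, q \in P -> exists2 b, b \in Bp &
    (q <= g b /\ forall y, q <= g y -> b <= y).
  by apply: IH => q qP; apply: H; rewrite inE qP orbT.
have [x hx] := H p (mem_head _ _).
exists (x :: Bp) => q; rewrite inE => /orP [/eqP ->|qP].
  by exists x; [exact: mem_head | exact: fiber_up].
by have [b bB hb] := HB q qP; exists b => //; rewrite inE bB orbT.
Qed.

Definition Q (e : D) := exists z, e <= g z /\ forall y, e <= g y -> z <= y.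

End Aux.

Theorem mainTheorem11 (dA dD : Order.disp_t) (A : latticeType dA) (D : latticeType dD)
  (g : A -> D) (P : seq D) :
  lattice_hom g -> (forall e : D, exists x : A, g x = e) ->
  finitely_generated A -> generates P -> dean P ->
  (lower_bounded g <-> forall p, p \in P -> exists x : A, least_of (fun y => g y = p) x).
Proof.
move=> Hg Hsurj [X HX] HP Hd; split.
  move=> Hlb p _; have [x0 gx0] := Hsurj p.
  case: (Hlb p) => [H|[m [pm Hm]]]; first by case: (H x0); rewrite gx0.
  have mx0 : m <= x0 by apply: Hm; rewrite gx0.
  exists m; split.
    by apply/eqP; rewrite eq_le pm andbT -gx0 (gmono Hg _ _ mx0).
  by move=> y gy; apply: Hm; rewrite gy.
move=> Hfib.
have [Bp HB] := getBp Hg _ Hfib.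
suff HQ : forall e, Q (g:=g) e.
  move=> e; right; have [z [ez Hz]] := HQ e; by exists z; split.
move=> e; elim: (HP e) => {e}.
- move=> p pP; have [b _ [pb Hb]] := HB p pP; by exists b.
- move=> e1 e2 _ [z1 [ez1 H1]] _ [z2 [ez2 H2]].
  have ez0 : e1 `&` e2 <= g (z1 `&` z2) by rewrite (gmeet Hg) leI2.
  have [z [ez zz0 zb]] := listmeet Hg _ (X ++ Bp) _ ez0.
  exists z; split => // y; elim: (HX y) => {y}.
  + by move=> x xX ex; apply: zb => //; rewrite mem_cat xX.
  + move=> y1 y2 _ IH1 _ IH2; rewrite (gmeet Hg) lexI => /andP [h1 h2].
    by rewrite lexI IH1 ?IH2.
  + move=> y1 y2 _ IH1 _ IH2; rewrite (gjoin Hg) => ey.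
    have := Hd e1 [:: e2] (g y1) [:: g y2].
    rewrite /smeet /sjoin /= meetC joinC => /(_ ey).
    case=> [[u]|[[v]|[p pP /andP [ep py]]]].
    * rewrite !inE => /orP [/eqP ->|/eqP ->] uy.
      - apply: (le_trans zz0); apply: leIxl; apply: H1; by rewrite (gjoin Hg).
      - apply: (le_trans zz0); apply: leIxr; apply: H2; by rewrite (gjoin Hg).
    * rewrite !inE => /orP [/eqP ->|/eqP ->] ev.
      - exact: (le_trans (IH1 ev) (leUl _ _)).
      - exact: (le_trans (IH2 ev) (leUr _ _)).
    * have [b bB [pb Hb]] := HB p pP.
      apply: (le_trans (zb b _ _)).
      - by rewrite mem_cat bB orbT.
      - exact: le_trans ep pb.
      - by apply: Hb; rewrite (gjoin Hg).
- move=> e1 e2 _ [z1 [ez1 H1]] _ [z2 [ez2 H2]].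
  exists (z1 `|` z2); split.
    by rewrite (gjoin Hg) leU2.
  by move=> y; rewrite leUx => /andP [h1 h2]; rewrite leUx H1 ?H2.
Qed.
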